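(* Let $(X,\mathrm{dist})$ be a complete metric space, $\Sigma$ a metric space, and $\{U_\sigma(t,\tau)\}_{\sigma\in\Sigma}$ a family of processes on $X$. Then the family is uniformly asymptotically compact if and only if it is totally uniformly dissipative.
   Context: A process on $X$ is a family of maps $U(t,\tau):X\to X$, indexed by reals $t\ge\tau$, with $U(\tau,\tau)=\mathrm{id}_X$ and $U(t,\tau)=U(t,s)U(s,\tau)$ for $t\ge s\ge\tau$; no continuity is assumed. For nonempty $B,C\subset X$, $\delta_X(B,C)=\sup_{x\in B}\inf_{\xi\in C}\mathrm{dist}(x,\xi)$. A set $K\subset X$ is uniformly attracting if for every bounded $C\subset X$, $\lim_{t-\tau\to\infty}\sup_{\sigma\in\Sigma}\delta_X(U_\sigma(t,\tau)C,K)=0$. The family is uniformly asymptotically compact if there exists a compact uniformly attracting set. A set $B\subset X$ is uniformly absorbing if for every bounded $C\subset X$ there is $t_e=t_e(C)$ with $U_\sigma(t,\tau)C\subset B$ for all $\sigma\in\Sigma$ whenever $t-\tau\ge t_e$. For $\varepsilon>0$, the $\varepsilon$-neighborhood of $K$ is $\mathcal{U}_\varepsilon(K)=\bigcup_{x\in K}\{\xi\in X:\mathrm{dist}(x,\xi)<\varepsilon\}$; $K$ is uniformly $\varepsilon$-absorbing if $\mathcal{U}_\varepsilon(K)$ is uniformly absorbing. The family is uniformly $\varepsilon$-dissipative if there is a finite uniformly $\varepsilon$-absorbing set, and totally uniformly dissipative if it is uniformly $\varepsilon$-dissipative for every $\varepsilon>0$. *)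

(* Defs.v *)
From Stdlib Require Import Reals Lra List.
Open Scope R_scope.

Record MetricSpace : Type := MkMetricSpace {
  carrier :> Type;
  dist : carrier -> carrier -> R;
  dist_nonneg : forall x y, 0 <= dist x y;
  dist_eq0 : forall x y, dist x y = 0 <-> x = y;
  dist_sym : forall x y, dist x y = dist y x;
  dist_tri : forall x y z, dist x z <= dist x y + dist y z
}.

Arguments dist {m} _ _.

Definition cauchy_seq {X : MetricSpace} (u : nat -> X) : Prop :=
  forall eps, 0 < eps -> exists N, forall m n, (N <= m)%nat -> (N <= n)%nat ->
    dist (u m) (u n) < eps.

Definition seq_converges_to {X : MetricSpace} (u : nat -> X) (l : X) : Prop :=
  forall eps, 0 < eps -> exists N, forall n, (N <= n)%nat -> dist (u n) l < eps.

Definition complete_metric (X : MetricSpace) : Prop :=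
  forall u : nat -> X, cauchy_seq u -> exists l, seq_converges_to u l.

Definition bounded {X : MetricSpace} (C : X -> Prop) : Prop :=
  exists x0 r, forall x, C x -> dist x0 x <= r.

Definition is_open {X : MetricSpace} (O : X -> Prop) : Prop :=
  forall x, O x -> exists eps, 0 < eps /\ forall y, dist x y < eps -> O y.

Definition compact {X : MetricSpace} (K : X -> Prop) : Prop :=
  forall (I : Type) (O : I -> X -> Prop),
    (forall i, is_open (O i)) ->
    (forall x, K x -> exists i, O i x) ->
    exists l : list I, forall x, K x -> exists i, In i l /\ O i x.

Definition finite_set {X : Type} (K : X -> Prop) : Prop :=
  exists l : list X, forall x, K x <-> In x l.

Definition process_family {X : MetricSpace} {S : Type}
    (U : S -> R -> R -> X -> X) : Prop :=
  (forall sigma tau x, U sigma tau tau x = x) /\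
  (forall sigma t s tau x, tau <= s -> s <= t ->
      U sigma t tau x = U sigma t s (U sigma s tau x)).

(* lim_{t-tau -> oo} sup_sigma delta_X(U_sigma(t,tau) C, K) = 0, unfolded. *)
Definition uniformly_attracting {X : MetricSpace} {S : Type}
    (U : S -> R -> R -> X -> X) (K : X -> Prop) : Prop :=
  forall C : X -> Prop, bounded C ->
  forall eps, 0 < eps -> exists T, forall t tau, tau <= t -> T <= t - tau ->
    forall sigma x, C x -> exists xi, K xi /\ dist (U sigma t tau x) xi < eps.

Definition uniformly_asymptotically_compact {X : MetricSpace} {S : Type}
    (U : S -> R -> R -> X -> X) : Prop :=
  exists K : X -> Prop, compact K /\ uniformly_attracting U K.

Definition uniformly_absorbing {X : MetricSpace} {S : Type}
    (U : S -> R -> R -> X -> X) (B : X -> Prop) : Prop :=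
  forall C : X -> Prop, bounded C -> exists te, forall sigma t tau,
    tau <= t -> te <= t - tau -> forall x, C x -> B (U sigma t tau x).

Definition eps_nbhd {X : MetricSpace} (eps : R) (K : X -> Prop) : X -> Prop :=
  fun xi => exists x, K x /\ dist x xi < eps.

Definition uniformly_eps_absorbing {X : MetricSpace} {S : Type}
    (U : S -> R -> R -> X -> X) (eps : R) (K : X -> Prop) : Prop :=
  uniformly_absorbing U (eps_nbhd eps K).

Definition uniformly_eps_dissipative {X : MetricSpace} {S : Type}
    (U : S -> R -> R -> X -> X) (eps : R) : Prop :=
  exists K : X -> Prop, finite_set K /\ uniformly_eps_absorbing U eps K.

Definition totally_uniformly_dissipative {X : MetricSpace} {S : Type}
    (U : S -> R -> R -> X -> X) : Prop :=
  forall eps, 0 < eps -> uniformly_eps_dissipative U eps.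

(* Main.v *)
Require Import Defs.
From Stdlib Require Import Reals.
From Stdlib Require Import Lra Lia List Classical ClassicalEpsilon.
Require Import Defs.

Definition e (n : nat) : R := / INR (S n).

Lemma e_pos n : 0 < e n.
Proof. unfold e; apply Rinv_0_lt_compat, lt_0_INR; lia. Qed.

Lemma e_small eps : 0 < eps -> exists N, 2 * e N < eps.
Proof.
  intro H. destruct (archimed_cor1 (eps/2)) as [N [H1 H2]]; [lra|].
  exists N. unfold e.
  assert (/ INR (S N) <= / INR N).
  { apply Rinv_le_contravar. apply lt_0_INR; lia. apply le_INR; lia. }
  lra.
Qed.

Definition Nb (X : MetricSpace) (l : nat -> list X) n (y : X) :=
  exists f, In f (l n) /\ dist f y <= e n.

Fixpoint chain {X : MetricSpace} (g : nat -> (X -> Prop) -> X) (n : nat) : X -> Prop :=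
  match n with
  | O => fun _ => True
  | S m => fun y => chain g m y /\ dist (g m (chain g m)) y <= e m
  end.

Lemma le_of_all_delta a b : (forall d, 0 < d -> a <= b + d) -> a <= b.
Proof.
  intro H; destruct (Rle_or_lt a b); auto.
  specialize (H ((a-b)/2) ltac:(lra)); lra.
Qed.

Lemma list_split {X : Type} (Bad : (X -> Prop) -> Prop)
  (Hmono : forall A B : X -> Prop, Bad A -> (forall y, A y -> B y) -> Bad B)
  (Hsplit : forall A B C : X -> Prop, Bad A -> (forall y, A y -> B y \/ C y) -> Bad B \/ Bad C)
  (Hempty : ~ Bad (fun _ => False)) :
  forall (L : list X) (A : X -> Prop) (Q : X -> X -> Prop), Bad A ->
    (forall y, A y -> exists f, In f L /\ Q f y) ->
    exists f, In f L /\ Bad (fun y => A y /\ Q f y).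
Proof.
  induction L as [|a L IH]; intros A Q HA HQ.
  - exfalso. apply Hempty. apply (Hmono A); auto.
    intros y Ay. destruct (HQ y Ay) as [f [[] _]].
  - destruct (Hsplit A (fun y => A y /\ Q a y) (fun y => A y /\ exists f, In f L /\ Q f y) HA)
      as [H|H].
    + intros y Ay. destruct (HQ y Ay) as [f [[<-|Hf] Hq]]; [left; auto | right; eauto].
    + exists a; split; [left; auto | auto].
    + destruct (IH _ Q H) as [f [Hf Hb]].
      * intros y [_ Hy]; auto.
      * exists f; split; [right; auto|]. apply (Hmono _ _ Hb). intros y [[Ay _] Hq]; auto.
Qed.

Lemma nested (X : MetricSpace) (HX : complete_metric X) (l : nat -> list X)
  (Bad : (X -> Prop) -> Prop)
  (Hmono : forall A B : X -> Prop, Bad A -> (forall y, A y -> B y) -> Bad B)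
  (Hsplit : forall A B C : X -> Prop, Bad A -> (forall y, A y -> B y \/ C y) -> Bad B \/ Bad C)
  (Hempty : ~ Bad (fun _ => False))
  (Hshrink : forall (A : X -> Prop) n, Bad A -> Bad (fun y => A y /\ Nb X l n y))
  (Hfull : Bad (fun _ => True)) :
  exists y, (forall n, Nb X l n y) /\ forall r, 0 < r -> Bad (fun w => dist y w < r).
Proof.
  assert (Hne : forall A, Bad A -> exists y, A y).
  { intros A HA. apply NNPP; intro Hn. apply Hempty. apply (Hmono A); auto.
    intros y Ay; apply Hn; eauto. }
  destruct (Hne _ Hfull) as [y0 _]. pose (inh := inhabits y0).
  assert (Hstep : forall n A, Bad A -> exists f, In f (l n) /\ Bad (fun y => A y /\ dist f y <= e n)).
  { intros n A HA.
    destruct (list_split Bad Hmono Hsplit Hempty (l n) (fun y => A y /\ Nb X l n y)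
                (fun f y => dist f y <= e n)) as [f [Hf Hb]].
    - apply Hshrink; auto.
    - intros y [_ [f [Hf Hd]]]; eauto.
    - exists f; split; auto. apply (Hmono _ _ Hb). intros y [[Ay _] Hd]; auto. }
  pose (g := fun n (A : X -> Prop) =>
    epsilon inh (fun f => In f (l n) /\ Bad (fun y => A y /\ dist f y <= e n))).
  assert (Hg : forall n A, Bad A -> In (g n A) (l n) /\ Bad (fun y => A y /\ dist (g n A) y <= e n)).
  { intros n A HA. unfold g. apply epsilon_spec. apply Hstep; auto. }
  assert (Hbad : forall n, Bad (chain g n)).
  { induction n; simpl; auto. apply Hg; auto. }
  assert (Hc : forall n, In (g n (chain g n)) (l n)) by (intro n; apply Hg, Hbad).
  pose (z := fun n => epsilon inh (chain g (S n))).
  assert (Hz : forall n, chain g (S n) (z n)).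
  { intro n. unfold z. apply epsilon_spec. apply Hne, Hbad. }
  assert (Hmon : forall n m, (n <= m)%nat -> forall y, chain g m y -> chain g n y).
  { intros n m Hnm; induction Hnm; auto. intros y [Hy _]; auto. }
  assert (Hzc : forall n m, (n <= m)%nat -> dist (g n (chain g n)) (z m) <= e n).
  { intros n m Hnm. assert (H := Hmon (S n) (S m) ltac:(lia) _ (Hz m)).
    destruct H as [_ H]; exact H. }
  assert (Hcauchy : cauchy_seq z).
  { intros eps Heps. destruct (e_small eps Heps) as [N HN]. exists N. intros m p Hm Hp.
    pose proof (Hzc N m Hm) as A1; pose proof (Hzc N p Hp) as A2.
    pose proof (dist_tri X (z m) (g N (chain g N)) (z p)) as A3.
    rewrite (dist_sym X (z m) (g N (chain g N))) in A3. lra. }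
  destruct (HX z Hcauchy) as [y Hy].
  assert (Hcy : forall n, dist (g n (chain g n)) y <= e n).
  { intro n. apply le_of_all_delta. intros d Hd. destruct (Hy d Hd) as [M HM].
    specialize (HM (max n M) ltac:(lia)).
    pose proof (Hzc n (max n M) ltac:(lia)).
    pose proof (dist_tri X (g n (chain g n)) (z (max n M)) y). lra. }
  exists y; split.
  - intro n. exists (g n (chain g n)); split; auto.
  - intros r Hr. destruct (e_small r Hr) as [N HN]. apply (Hmono (chain g (S N))); auto.
    intros w [_ Hw]. pose proof (Hcy N) as B1.
    pose proof (dist_tri X y (g N (chain g N)) w) as B2.
    rewrite (dist_sym X y (g N (chain g N))) in B2. lra.
Qed.

Lemma nat_above te : exists N, te <= INR N.
Proof. destruct (INR_unbounded te) as [N H]. exists N; lra. Qed.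

Theorem theorem3p8 (X : MetricSpace) (HX : complete_metric X)
  (Sigma : MetricSpace) (U : Sigma -> R -> R -> X -> X)
  (HU : process_family U) :
  uniformly_asymptotically_compact U <-> totally_uniformly_dissipative U.
Proof.
  split.
  - intros [K [HK Hatt]] eps Heps.
    destruct (HK X (fun x y => K x /\ dist x y < eps/2)) as [L HL].
    + intros x y [Kx Hd]. exists (eps/2 - dist x y); split; [lra|].
      intros z Hz. split; auto. pose proof (dist_tri X x y z); lra.
    + intros x Kx. exists x; split; auto.
      assert (dist x x = 0) by (apply dist_eq0; auto). lra.
    + exists (fun x => In x L); split.
      * exists L; intro; tauto.
      * intros C HC. destruct (Hatt C HC (eps/2) ltac:(lra)) as [T HT].
        exists T. intros sigma t tau H1 H2 x Cx.
        destruct (HT t tau H1 H2 sigma x Cx) as [xi [Kxi Hd]].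
        destruct (HL xi Kxi) as [i [Hi [_ Hd2]]].
        exists i; split; auto.
        pose proof (dist_tri X i xi (U sigma t tau x)).
        rewrite (dist_sym X xi) in H. lra.
  - intros H.
    assert (Hl : forall n, exists L : list X,
               uniformly_absorbing U (eps_nbhd (e n) (fun x => In x L))).
    { intro n. destruct (H (e n) (e_pos n)) as [K [[L HL] HK]].
      exists L. intros C HC. destruct (HK C HC) as [te Hte]. exists te.
      intros sigma t tau H1 H2 x Cx. destruct (Hte sigma t tau H1 H2 x Cx) as [f [Kf Hd]].
      exists f; split; auto. apply HL; auto. }
    pose (l := fun n => epsilon (inhabits nil)
                 (fun L : list X => uniformly_absorbing U (eps_nbhd (e n) (fun x => In x L)))).
    assert (Hls : forall n, uniformly_absorbing U (eps_nbhd (e n) (fun x => In x (l n)))).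
    { intro n. unfold l. apply epsilon_spec. apply Hl. }
    exists (fun y => forall n, Nb X l n y). split.
    + intros I O Hopen Hcov. apply NNPP; intro Hno.
      destruct (nested X HX l
        (fun A => ~ exists L : list I, forall x, (forall n, Nb X l n x) -> A x ->
                     exists i, In i L /\ O i x)) as [y [Ky Hball]].
      * intros A B HA HAB [L HL]. apply HA. exists L. intros x Kx Ax. apply HL; auto.
      * intros A B C HA Hs. apply NNPP; intro Hn. apply not_or_and in Hn as [HB HC].
        apply NNPP in HB as [L1 H1]. apply NNPP in HC as [L2 H2].
        apply HA. exists (L1 ++ L2). intros x Kx Ax.
        destruct (Hs x Ax) as [Bx|Cx].
        -- destruct (H1 x Kx Bx) as [i [Hi Oi]]. exists i; split; auto. apply in_or_app; auto.
        -- destruct (H2 x Kx Cx) as [i [Hi Oi]]. exists i; split; auto. apply in_or_app; auto.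
      * intro Hf. apply Hf. exists nil. intros x _ [].
      * intros A n HA [L HL]. apply HA. exists L. intros x Kx Ax. apply HL; auto.
      * intros [L HL]. apply Hno. exists L. intros x Kx. apply HL; auto.
      * destruct (Hcov y Ky) as [i Oi]. destruct (Hopen i y Oi) as [r [Hr Hro]].
        apply (Hball r Hr). exists (i :: nil). intros x _ Hx. exists i; split; [left; auto|].
        apply Hro; auto.
    + intros C HC eps Heps. apply NNPP; intro Hno.
      pose (P := fun k w => exists t tau sigma x, tau <= t /\ INR k <= t - tau /\ C x /\
                   w = U sigma t tau x /\
                   forall xi, (forall n, Nb X l n xi) -> ~ dist w xi < eps).
      assert (HP : forall k, exists w, P k w).
      { intro k. apply NNPP; intro Hk. apply Hno. exists (INR k).
        intros t tau H1 H2 sigma x Cx. apply NNPP; intro Hx. apply Hk.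
        exists (U sigma t tau x), t, tau, sigma, x. repeat split; auto.
        intros xi Kxi Hd. apply Hx; exists xi; auto. }
      destruct (HP 0%nat) as [w0 _].
      pose (w := fun k => epsilon (inhabits w0) (P k)).
      assert (Hw : forall k, P k (w k)) by (intro k; apply epsilon_spec, HP).
      destruct (nested X HX l (fun A => forall M, exists k, (M <= k)%nat /\ A (w k)))
        as [y [Ky Hball]].
      * intros A B HA HAB M. destruct (HA M) as [k [Hk Ak]]. eauto.
      * intros A B D HA Hs. apply NNPP; intro Hn. apply not_or_and in Hn as [HB HD].
        apply not_all_ex_not in HB as [M1 HM1]. apply not_all_ex_not in HD as [M2 HM2].
        destruct (HA (max M1 M2)) as [k [Hk Ak]].
        destruct (Hs _ Ak) as [Bk|Dk].
        -- apply HM1; exists k; split; [lia|auto].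
        -- apply HM2; exists k; split; [lia|auto].
      * intro Hf. destruct (Hf 0%nat) as [k [_ []]].
      * intros A n HA M. destruct (Hls n C HC) as [te Hte].
        destruct (nat_above te) as [N HN].
        destruct (HA (max M N)) as [k [Hk Ak]].
        exists k; split; [lia|split; auto].
        destruct (Hw k) as [t [tau [sigma [x [H1 [H2 [Cx [Heq _]]]]]]]].
        assert (INR N <= INR k) by (apply le_INR; lia).
        destruct (Hte sigma t tau H1 ltac:(lra) x Cx) as [f [Hf Hd]].
        exists f; split; auto. rewrite Heq; lra.
      * intro M. exists M; split; auto.
      * destruct (Hball eps Heps 0%nat) as [k [_ Hk]].
        destruct (Hw k) as [t [tau [sigma [x [_ [_ [_ [_ Hfar]]]]]]]].
        apply (Hfar y Ky). rewrite dist_sym; auto.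
Qed.
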